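(* Let $(\mathcal{M},d)$ be an NPC space, $\gamma:[0,1]\to\mathcal{M}$ a geodesic and $\alpha\in[1,2]$. Then for every $\delta\ge0$, $t\in[0,1]$ and $z\in\mathcal{M}$, $$ d(\gamma_t,z)^\alpha\le(1+\delta)^{1-\alpha/2}\left[(1-t)^{\alpha/2}d(\gamma_0,z)^\alpha+t^{\alpha/2}d(\gamma_1,z)^\alpha\right]-\delta^{1-\alpha/2}\left[t(1-t)\,d(\gamma_0,\gamma_1)^2\right]^{\alpha/2}, $$ with the convention $0^0=1$.
   Context: A Polish space $(\mathcal{M},d)$ is an (global) NPC space if for any $x_0,x_1\in\mathcal{M}$ there is $y\in\mathcal{M}$ with $d(z,y)^2\le\frac12d(z,x_0)^2+\frac12d(z,x_1)^2-\frac14d(x_0,x_1)^2$ for all $z\in\mathcal{M}$. A geodesic is a map $\gamma:[0,1]\to\mathcal{M}$ with $d(\gamma_s,\gamma_t)=|s-t|\,d(\gamma_0,\gamma_1)$ for all $s,t$. In NPC spaces any two points are joined by a unique geodesic, and the CN inequality $d(\gamma_t,y)^2\le(1-t)d(\gamma_0,y)^2+t\,d(\gamma_1,y)^2-t(1-t)d(\gamma_0,\gamma_1)^2$ holds. *)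

(* Defs.v *)
From Stdlib Require Import Reals Lra.
Open Scope R_scope.

Definition is_metric {M : Type} (d : M -> M -> R) : Prop :=
  (forall x y, 0 <= d x y) /\
  (forall x y, d x y = 0 <-> x = y) /\
  (forall x y, d x y = d y x) /\
  (forall x y z, d x z <= d x y + d y z).

Definition metric_complete {M : Type} (d : M -> M -> R) : Prop :=
  forall u : nat -> M,
    (forall eps, 0 < eps -> exists N, forall m n, (N <= m)%nat -> (N <= n)%nat ->
        d (u m) (u n) < eps) ->
    exists l, forall eps, 0 < eps -> exists N, forall n, (N <= n)%nat -> d (u n) l < eps.

Definition metric_separable {M : Type} (d : M -> M -> R) : Prop :=
  exists s : nat -> M, forall x eps, 0 < eps -> exists n, d x (s n) < eps.

Definition polish {M : Type} (d : M -> M -> R) : Prop :=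
  is_metric d /\ metric_complete d /\ metric_separable d.

Definition NPC {M : Type} (d : M -> M -> R) : Prop :=
  polish d /\
  forall x0 x1 : M, exists y : M, forall z : M,
    (d z y)^2 <= / 2 * (d z x0)^2 + / 2 * (d z x1)^2 - / 4 * (d x0 x1)^2.

(* Geodesic gamma : [0,1] -> M, represented as a function on R restricted to [0,1]. *)
Definition geodesic {M : Type} (d : M -> M -> R) (gamma : R -> M) : Prop :=
  forall s t, 0 <= s <= 1 -> 0 <= t <= 1 ->
    d (gamma s) (gamma t) = Rabs (s - t) * d (gamma 0) (gamma 1).

(* Real power x^a for x >= 0, with the convention 0^0 = 1 (and 0^a = 0 for a <> 0). *)
Definition rpow (x a : R) : R :=
  if Req_EM_T x 0 then (if Req_EM_T a 0 then 1 else 0) else Rpower x a.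

(* Main.v *)
Require Import Defs.
From Stdlib Require Import Reals Lra.
Open Scope R_scope.

Lemma rp_pos x a : 0 < x -> rpow x a = Rpower x a.
Proof. intro H. unfold rpow. destruct (Req_EM_T x 0); [lra|auto]. Qed.

Lemma rp_zero a : a <> 0 -> rpow 0 a = 0.
Proof. intro H. unfold rpow. destruct (Req_EM_T 0 0); [|lra]. destruct (Req_EM_T a 0); [lra|auto]. Qed.

Lemma rp_nonneg x a : 0 <= rpow x a.
Proof. unfold rpow. destruct (Req_EM_T x 0). destruct (Req_EM_T a 0); lra.
unfold Rpower. left; apply exp_pos. Qed.

Lemma rp_exp0 x : rpow x 0 = 1.
Proof. unfold rpow. destruct (Req_EM_T x 0). destruct (Req_EM_T 0 0); lra.
unfold Rpower. rewrite Rmult_0_l, exp_0. auto. Qed.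

Lemma rp_exp1 x : 0 <= x -> rpow x 1 = x.
Proof. intro H. destruct (Req_dec x 0). subst. apply rp_zero; lra.
rewrite rp_pos by lra. apply Rpower_1; lra. Qed.

Lemma rp_exp2 x : 0 <= x -> rpow x 2 = x^2.
Proof. intro H. destruct (Req_dec x 0). subst. rewrite rp_zero by lra. simpl; ring.
rewrite rp_pos by lra. replace 2 with (INR 2) by (simpl; ring). apply Rpower_pow; lra. Qed.

Lemma rp_one a : rpow 1 a = 1.
Proof. rewrite rp_pos by lra. unfold Rpower. rewrite ln_1, Rmult_0_r, exp_0. auto. Qed.

Lemma rp_mono x y a : 0 < a -> 0 <= x <= y -> rpow x a <= rpow y a.
Proof. intros Ha Hx. destruct (Req_dec x 0). subst. rewrite rp_zero by lra. apply rp_nonneg.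
rewrite !rp_pos by lra. apply Rle_Rpower_l; lra. Qed.

Lemma rp_mul x y a : a <> 0 -> 0 <= x -> 0 <= y -> rpow (x*y) a = rpow x a * rpow y a.
Proof. intros Ha Hx Hy. destruct (Req_dec x 0). subst. rewrite Rmult_0_l, rp_zero by lra. ring.
destruct (Req_dec y 0). subst. rewrite Rmult_0_r, rp_zero by lra. ring.
rewrite !rp_pos by nra. rewrite Rpower_mult_distr; lra. Qed.

Lemma rp_sq x a : a <> 0 -> 0 <= x -> rpow (x^2) a = rpow x (2*a).
Proof. intros Ha Hx. destruct (Req_dec x 0). subst. replace (0^2) with 0 by ring. rewrite !rp_zero; lra.
rewrite !rp_pos by nra. unfold Rpower. simpl. rewrite Rmult_1_r, ln_mult by lra. f_equal. ring. Qed.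

Lemma Rdiv_le_0_compat a b : 0 <= a -> 0 < b -> 0 <= a / b.
Proof. intros. unfold Rdiv. apply Rmult_le_pos; [lra|]. left; apply Rinv_0_lt_compat; lra. Qed.

Lemma Rdiv_le_1 a b : 0 < b -> a <= b -> a / b <= 1.
Proof. intros. replace 1 with (b / b) by (field; lra). unfold Rdiv.
apply Rmult_le_compat_r; [left; apply Rinv_0_lt_compat; lra|lra]. Qed.

Lemma amgm X Y p q : 0 <= X -> 0 <= Y -> 0 < p -> 0 < q -> p + q = 1 ->
  rpow X p * rpow Y q <= p * X + q * Y.
Proof. intros HX HY Hp Hq Hpq.
destruct (Req_dec X 0). subst. rewrite rp_zero by lra. nra.
destruct (Req_dec Y 0). subst. rewrite (rp_zero q) by lra. nra.
rewrite !rp_pos by lra. unfold Rpower.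
set (G := exp (p * ln X) * exp (q * ln Y)).
assert (HG : 0 < G) by (unfold G; apply Rmult_lt_0_compat; apply exp_pos).
assert (lnG : ln G = p * ln X + q * ln Y).
{ unfold G. rewrite ln_mult by apply exp_pos. rewrite !ln_exp. auto. }
assert (E1 : X = G * exp (ln X - ln G)).
{ unfold Rminus. rewrite exp_plus, exp_Ropp, !exp_ln by lra. field. lra. }
assert (E2 : Y = G * exp (ln Y - ln G)).
{ unfold Rminus. rewrite exp_plus, exp_Ropp, !exp_ln by lra. field. lra. }
pose proof (exp_ineq1_le (ln X - ln G)). pose proof (exp_ineq1_le (ln Y - ln G)).
assert (X >= G * (1 + (ln X - ln G))) by (rewrite E1 at 1; nra).
assert (Y >= G * (1 + (ln Y - ln G))) by (rewrite E2 at 1; nra).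
assert (G * (p * (1 + (ln X - ln G)) + q * (1 + (ln Y - ln G))) = G).
{ rewrite lnG. replace q with (1 - p) by lra. ring. }
nra. Qed.

Lemma holder A B C E p q : 0 <= A -> 0 <= B -> 0 <= C -> 0 <= E ->
  0 < p -> 0 < q -> p + q = 1 ->
  rpow A p * rpow C q + rpow B p * rpow E q <= rpow (A+B) p * rpow (C+E) q.
Proof. intros HA HB HC HE Hp Hq Hpq.
destruct (Req_dec (A+B) 0).
{ assert (A = 0) by lra. assert (B = 0) by lra. subst. rewrite !rp_zero by lra.
  pose proof (rp_nonneg (0+0) p). pose proof (rp_nonneg (C+E) q). nra. }
destruct (Req_dec (C+E) 0).
{ assert (C = 0) by lra. assert (E = 0) by lra. subst. rewrite !(rp_zero q) by lra.
  pose proof (rp_nonneg (0+0) q). pose proof (rp_nonneg (A+B) p). nra. }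
assert (0 < A + B) by lra. assert (0 < C + E) by lra.
set (S := A + B) in *. set (T := C + E) in *.
assert (eA : A = S * (A / S)) by (field; auto).
assert (eB : B = S * (B / S)) by (field; auto).
assert (eC : C = T * (C / T)) by (field; auto).
assert (eE : E = T * (E / T)) by (field; auto).
assert (0 <= A / S) by (apply Rdiv_le_0_compat; lra).
assert (0 <= B / S) by (apply Rdiv_le_0_compat; lra).
assert (0 <= C / T) by (apply Rdiv_le_0_compat; lra).
assert (0 <= E / T) by (apply Rdiv_le_0_compat; lra).
rewrite eA, eB, eC, eE. rewrite !rp_mul by lra.
pose proof (amgm (A/S) (C/T) p q ltac:(lra) ltac:(lra) Hp Hq Hpq).
pose proof (amgm (B/S) (E/T) p q ltac:(lra) ltac:(lra) Hp Hq Hpq).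
assert (A / S + B / S = 1) by (unfold S; field; auto).
assert (C / T + E / T = 1) by (unfold T; field; auto).
pose proof (rp_nonneg S p). pose proof (rp_nonneg T q).
assert (K : rpow (A / S) p * rpow (C / T) q + rpow (B / S) p * rpow (E / T) q <= 1) by nra.
assert (0 <= rpow S p * rpow T q) by nra.
replace (rpow S p * rpow (A / S) p * (rpow T q * rpow (C / T) q) +
 rpow S p * rpow (B / S) p * (rpow T q * rpow (E / T) q)) with
 (rpow S p * rpow T q * (rpow (A / S) p * rpow (C / T) q + rpow (B / S) p * rpow (E / T) q)) by ring.
nra. Qed.

Lemma subadd u v p : 0 <= u -> 0 <= v -> 0 < p <= 1 -> rpow (u+v) p <= rpow u p + rpow v p.
Proof. intros Hu Hv Hp.
assert (key : forall s, 0 <= s <= 1 -> s <= rpow s p).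
{ intros s Hs. destruct (Req_dec s 0). subst. rewrite rp_zero by lra. lra.
  rewrite rp_pos by lra. unfold Rpower. rewrite <- (exp_ln s) at 1 by lra.
  assert (ln s <= 0). { rewrite <- ln_1. destruct (Req_dec s 1). subst; lra. left; apply ln_increasing; lra. }
  destruct (Req_dec (ln s) (p * ln s)). rewrite <- H1; lra.
  left. apply exp_increasing. nra. }
destruct (Req_dec (u+v) 0). { assert (u=0) by lra. assert (v=0) by lra. subst. replace (0+0) with 0 by ring. rewrite !rp_zero by lra. lra. }
assert (0 < u + v) by lra. set (S := u+v) in *.
assert (eu : u = S * (u / S)) by (field; auto).
assert (ev : v = S * (v / S)) by (field; auto).
assert (0 <= u / S <= 1). { split. apply Rdiv_le_0_compat; lra. apply Rdiv_le_1; [lra| unfold S; lra]. }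
assert (0 <= v / S <= 1). { split. apply Rdiv_le_0_compat; lra. apply Rdiv_le_1; [lra| unfold S; lra]. }
rewrite eu at 1. rewrite ev at 1. rewrite !rp_mul by lra.
pose proof (key _ H1). pose proof (key _ H2).
assert (u / S + v / S = 1) by (unfold S; field; auto).
pose proof (rp_nonneg S p). nra. Qed.

Lemma lip_cont f K x : 0 <= K -> (forall s t, Rabs (f s - f t) <= K * Rabs (s - t)) -> continuity_pt f x.
Proof. intros HK Hf. unfold continuity_pt, continue_in, limit1_in, limit_in.
intros eps Heps. exists (eps / (K + 1)). split.
{ unfold Rdiv. apply Rmult_lt_0_compat; [lra|apply Rinv_0_lt_compat; lra]. }
intros y [_ Hy]. simpl in *. unfold R_dist in *.
assert (E : (K + 1) * (eps / (K + 1)) = eps) by (field; lra).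
pose proof (Hf y x). pose proof (Rabs_pos (y - x)). nra. Qed.

Definition cl (t : R) := Rmax 0 (Rmin 1 t).

Lemma cl_lip s t : Rabs (cl s - cl t) <= 1 * Rabs (s - t).
Proof. unfold cl, Rmax, Rmin. repeat destruct Rle_dec; unfold Rabs; repeat destruct Rcase_abs; lra. Qed.

Lemma cl_range t : 0 <= cl t <= 1.
Proof. unfold cl, Rmax, Rmin. repeat destruct Rle_dec; lra. Qed.

Lemma cl_id t : 0 <= t <= 1 -> cl t = t.
Proof. intro. unfold cl, Rmax, Rmin. repeat destruct Rle_dec; lra. Qed.

Lemma cp_plus f g x : continuity_pt f x -> continuity_pt g x -> continuity_pt (fun t => f t + g t) x.
Proof. exact (continuity_pt_plus f g x). Qed.
Lemma cp_minus f g x : continuity_pt f x -> continuity_pt g x -> continuity_pt (fun t => f t - g t) x.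
Proof. exact (continuity_pt_minus f g x). Qed.
Lemma cp_mult f g x : continuity_pt f x -> continuity_pt g x -> continuity_pt (fun t => f t * g t) x.
Proof. exact (continuity_pt_mult f g x). Qed.
Lemma cp_const c x : continuity_pt (fun _ => c) x.
Proof. apply continuity_pt_const. intros a b; auto. Qed.

Section G.
Context {M : Type} (d : M -> M -> R) (gamma : R -> M).
Hypothesis Hmet : is_metric d.
Hypothesis Hmp : forall x0 x1 : M, exists y : M, forall z : M,
    (d z y)^2 <= / 2 * (d z x0)^2 + / 2 * (d z x1)^2 - / 4 * (d x0 x1)^2.
Hypothesis Hg : geodesic d gamma.

Let D := d (gamma 0) (gamma 1).

Lemma absD x : (Rabs x * D)^2 = x^2 * D^2.
Proof. rewrite Rpow_mult_distr, pow2_abs. auto. Qed.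

Lemma mid_ineq z s u : 0 <= s <= 1 -> 0 <= u <= 1 ->
  d (gamma ((s+u)/2)) z ^2 <= /2 * d (gamma s) z ^2 + /2 * d (gamma u) z ^2 - /4 * ((u - s) * D)^2.
Proof. intros Hs Hu. destruct Hmet as [Hpos [Hzero [Hsym Htri]]].
destruct (Hmp (gamma s) (gamma u)) as [y Hy].
set (m := gamma ((s+u)/2)).
assert (Hm : 0 <= (s+u)/2 <= 1) by lra.
assert (e1 : d m (gamma s) = Rabs ((s+u)/2 - s) * D) by (apply Hg; lra).
assert (e2 : d m (gamma u) = Rabs ((s+u)/2 - u) * D) by (apply Hg; lra).
assert (e3 : d (gamma s) (gamma u) = Rabs (s - u) * D) by (apply Hg; lra).
pose proof (Hy m) as Hym. rewrite e1, e2, e3, !absD in Hym.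
assert (d m y ^2 <= 0) by nra.
pose proof (Hpos m y).
assert (d m y = 0) by nra. apply Hzero in H1. rewrite <- H1 in Hy.
pose proof (Hy z) as Hz. rewrite (Hsym z m), (Hsym z (gamma s)), (Hsym z (gamma u)), e3, absD in Hz.
replace ((u - s)^2) with ((s-u)^2) by ring. lra. Qed.

Lemma CN z t : 0 <= t <= 1 ->
  d (gamma t) z ^2 <= (1 - t) * d (gamma 0) z ^2 + t * d (gamma 1) z ^2 - t * (1 - t) * D^2.
Proof. intro Ht. destruct Hmet as [Hpos [Hzero [Hsym Htri]]].
set (a := d (gamma 0) z). set (b := d (gamma 1) z).
set (f := fun t => d (gamma (cl t)) z).
assert (HD : 0 <= D) by apply Hpos.
assert (flip : forall s t, Rabs (f s - f t) <= D * Rabs (s - t)).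
{ intros s0 t0. unfold f.
  assert (e : d (gamma (cl s0)) (gamma (cl t0)) = Rabs (cl s0 - cl t0) * D)
    by (apply Hg; apply cl_range).
  pose proof (Htri (gamma (cl s0)) (gamma (cl t0)) z).
  pose proof (Htri (gamma (cl t0)) (gamma (cl s0)) z).
  rewrite (Hsym (gamma (cl t0)) (gamma (cl s0))) in H0.
  pose proof (cl_lip s0 t0). pose proof (Rabs_pos (cl s0 - cl t0)).
  apply Rabs_le. split; nra. }
set (chi := fun t => f t * f t - cl t * cl t * (D * D) - (1 - cl t) * (a * a) - cl t * (b * b - D * D)).
assert (cont : forall x, continuity_pt chi x).
{ intro x. assert (cf : continuity_pt f x) by (apply (lip_cont f D); auto).
  assert (cc : continuity_pt cl x) by (apply (lip_cont cl 1); [lra|apply cl_lip]).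
  unfold chi. repeat first [apply cp_minus | apply cp_mult | apply cp_const | assumption]. }
assert (chiE : forall t, 0 <= t <= 1 -> chi t = d (gamma t) z ^2 - t^2 * D^2 - (1 - t) * a^2 - t * (b^2 - D^2)).
{ intros t0 H0. unfold chi, f. rewrite cl_id by auto. ring. }
destruct (continuity_ab_maj chi 0 1 ltac:(lra) (fun c _ => cont c)) as [Mx [HMx HMr]].
assert (c0 : chi 0 = 0) by (rewrite chiE by lra; unfold a; ring).
assert (c1 : chi 1 = 0) by (rewrite chiE by lra; unfold b, D; ring).
assert (Hmax : chi Mx <= 0).
{ destruct (Req_dec Mx 0) as [->|H0]; [lra|].
  destruct (Req_dec Mx 1) as [->|H1]; [lra|].
  set (h := Rmin Mx (1 - Mx)).
  assert (Hh : h = Mx \/ h = 1 - Mx) by (unfold h, Rmin; destruct Rle_dec; auto).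
  assert (Hh1 : h <= Mx /\ h <= 1 - Mx) by (unfold h, Rmin; destruct Rle_dec; lra).
  assert (Hh0 : 0 < h) by (destruct Hh as [-> | ->]; lra).
  pose proof (mid_ineq z (Mx - h) (Mx + h) ltac:(lra) ltac:(lra)) as Hmid.
  replace ((Mx - h + (Mx + h)) / 2) with Mx in Hmid by field.
  pose proof (chiE Mx ltac:(lra)). pose proof (chiE (Mx - h) ltac:(lra)).
  pose proof (chiE (Mx + h) ltac:(lra)).
  assert (chi Mx <= (chi (Mx - h) + chi (Mx + h)) / 2).
  { rewrite H, H2, H3. fold D in Hmid. nra. }
  pose proof (HMx (Mx - h) ltac:(lra)). pose proof (HMx (Mx + h) ltac:(lra)).
  destruct Hh as [E|E].
  - replace (Mx - h) with 0 in H4 by lra. lra.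
  - replace (Mx + h) with 1 in H4 by lra. lra. }
pose proof (HMx t Ht). rewrite chiE in H by auto. fold a b. nra. Qed.

End G.

Theorem proposition4p1 (M : Type) (d : M -> M -> R) (gamma : R -> M) (alpha : R) :
  NPC d -> geodesic d gamma -> 1 <= alpha <= 2 ->
  forall (delta t : R) (z : M), 0 <= delta -> 0 <= t <= 1 ->
    rpow (d (gamma t) z) alpha <=
      rpow (1 + delta) (1 - alpha / 2) *
        (rpow (1 - t) (alpha / 2) * rpow (d (gamma 0) z) alpha
         + rpow t (alpha / 2) * rpow (d (gamma 1) z) alpha)
      - rpow delta (1 - alpha / 2) * rpow (t * (1 - t) * (d (gamma 0) (gamma 1))^2) (alpha / 2).
Proof.
intros [[Hmet _] Hmp] Hg Ha delta t z Hdel Ht.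
pose proof (CN d gamma Hmet Hmp Hg z t Ht) as Hcn.
pose proof Hmet as [Hpos _].
set (a := d (gamma 0) z) in *. set (b := d (gamma 1) z) in *.
set (D := d (gamma 0) (gamma 1)) in *. set (x := d (gamma t) z) in *.
assert (0 <= a) by apply Hpos. assert (0 <= b) by apply Hpos.
assert (0 <= D) by apply Hpos. assert (0 <= x) by apply Hpos.
assert (0 <= t * (1 - t) * D^2) by (apply Rmult_le_pos; [nra|nra]).
destruct (Req_dec alpha 2) as [->|Hne].
{ replace (1 - 2/2) with 0 by field. replace (2/2) with 1 by field.
  rewrite !rp_exp0, !rp_exp1 by lra. rewrite !rp_exp2 by lra. lra. }
set (p := alpha / 2). set (q := 1 - p).
assert (Hp : 0 < p <= 1) by (unfold p; lra). assert (Hq : 0 < q) by (unfold q, p; lra).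
assert (sq : forall y, 0 <= y -> rpow y alpha = rpow (y^2) p).
{ intros y Hy. unfold p. rewrite rp_sq by lra. f_equal. field. }
rewrite !sq by auto.
set (u := (1 - t) * a^2). set (v := t * b^2). set (w := t * (1 - t) * D^2) in *.
assert (0 <= u) by (unfold u; nra). assert (0 <= v) by (unfold v; nra).
rewrite <- !rp_mul by (lra || nra).
fold u v.
fold u v in Hcn.
assert (Hx2 : rpow (x^2) p <= rpow (u + v - w) p) by (apply rp_mono; [lra| split; nra]).
pose proof (holder (u + v - w) w 1 delta p q ltac:(nra) ltac:(lra) ltac:(lra) ltac:(lra)
   ltac:(lra) Hq ltac:(unfold q; ring)) as Hh2.
rewrite rp_one in Hh2. replace (u + v - w + w) with (u + v) in Hh2 by ring.
pose proof (subadd u v p ltac:(lra) ltac:(lra) Hp).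
pose proof (rp_nonneg (1 + delta) q). pose proof (rp_nonneg w p).
assert (rpow (u + v) p * rpow (1 + delta) q <= (rpow u p + rpow v p) * rpow (1 + delta) q)
  by (apply Rmult_le_compat_r; lra).
lra.
Qed.
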